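(* Each of the ball relations $\mathbf{B}^{\infty}$ and $\mathbf{B}^{1}$ on $\mathfrak{S}\mathbb{Q}$ (with equivalence $\asymp_{\mathfrak{S}\mathbb{Q}}$) respects the equivalence and satisfies the five metric-space axioms, so that $\mathfrak{S}^\infty\mathbb{Q}$ and $\mathfrak{S}^1\mathbb{Q}$ are metric spaces. More generally, for any metric space $X$, the relation $\mathbf{B}^{\mathfrak{S}^\infty X}_\varepsilon f\,g := \mathsf{fold}_\star(\mathbf{B}^X_\varepsilon\circ f @ g)$ makes $\mathfrak{S}X$ a metric space $\mathfrak{S}^\infty X$.
   Context: Step functions. For a type $X$, $\mathfrak{S}X$ is the inductive type of (formal, rational) step functions on $[0,1]$: constructors $\mathsf{const}\ x$ ($x\in X$, written $\hat x$) and $\mathsf{glue}\ o\ f\ g$ ($o\in(0,1)\cap\mathbb{Q}$, $f,g\in\mathfrak{S}X$). Split. For $a\in(0,1)\cap\mathbb{Q}$: $\mathsf{SplitL}\ \hat x\ a := \hat x$, $\mathsf{SplitR}\ \hat x\ a:=\hat x$, and $\mathsf{SplitL}(\mathsf{glue}\ o\ f_l\ f_r)\ a :=$ $\mathsf{SplitL}\ f_l\ (a/o)$ if $a<o$; $f_l$ if $a=o$; $\mathsf{glue}\ (o/a)\ f_l\ (\mathsf{SplitL}\ f_r\ \tfrac{a-o}{1-o})$ if $a>o$. $\mathsf{SplitR}(\mathsf{glue}\ o\ f_l\ f_r)\ a :=$ $\mathsf{glue}\ \tfrac{o-a}{1-a}\ (\mathsf{SplitR}\ f_l\ (a/o))\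 f_r$ if $a<o$; $f_r$ if $a=o$; $\mathsf{SplitR}\ f_r\ \tfrac{a-o}{1-o}$ if $a>o$. Map and ap. $\mathsf{map}\ \varphi\ \hat x := \widehat{\varphi x}$, $\mathsf{map}\ \varphi\ (\mathsf{glue}\ o\ f\ g):=\mathsf{glue}\ o\ (\mathsf{map}\ \varphi\ f)(\mathsf{map}\ \varphi\ g)$; $\varphi\circ x:=\mathsf{map}\ \varphi\ x$. $\hat\varphi @ x := \mathsf{map}\ \varphi\ x$, $(\mathsf{glue}\ o\ F_l\ F_r) @ x := \mathsf{glue}\ o\ (F_l @ \mathsf{SplitL}\ x\ o)\ (F_r @ \mathsf{SplitR}\ x\ o)$. $f\{\circledast\}g := (\lambda u v. u\circledast v)\circ f @ g$. Fold. $\mathsf{fold}\ \varphi\ \psi\ \hat x:=\varphi x$, $\mathsf{fold}\ \varphi\ \psi\ (\mathsf{glue}\ o\ f\ g) := \psi\ o\ (\mathsf{fold}\ \varphi\ \psi\ f)(\mathsf{fold}\ \varphi\ \psi\ g)$. $\mathsf{fold}_\star := \mathsf{fold}\ \mathrm{id}\ (\lambda o\,p\,q.\ p\wedge q)$, $\mathsf{fold}_{\sup} := \mathsf{fold}\ \mathrm{id}\ (\lambda o\,x\,y.\max x\,y)$, $\mathsf{fold}_{\mathrm{affine}} := \mathsf{fold}\ \mathrm{id}\ (\lambda o\,x\,y.\ ox+(1-o)y)$. Equivalence. For a setoid $X$, $f\asymp_{\mathfrak{S}X} g := \mathsf{fold}_\star(f\{\asymp_X\}g)$. Norms and balls. $\|f\|_\infty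 := \mathsf{fold}_{\sup}(\mathsf{abs}\circ f)$, $\|f\|_1 := \mathsf{fold}_{\mathrm{affine}}(\mathsf{abs}\circ f)$; for $\varepsilon\in\mathbb{Q}^+$, $\mathbf{B}^\infty_\varepsilon f\,g := \|f\{-\}g\|_\infty\le\varepsilon$ and $\mathbf{B}^1_\varepsilon f\,g:=\|f\{-\}g\|_1\le\varepsilon$. Metric space. A metric space is a setoid $(X,\asymp)$ with a respectful relation $\mathbf{B}:\mathbb{Q}^+\Rightarrow X\Rightarrow X\Rightarrow\mathrm{Prop}$ such that for all $x,y,z$ and $\varepsilon,\varepsilon_1,\varepsilon_2\in\mathbb{Q}^+$: (1) $\mathbf{B}_\varepsilon x\,x$; (2) $\mathbf{B}_\varepsilon x\,y\Rightarrow\mathbf{B}_\varepsilon y\,x$; (3) $\mathbf{B}_{\varepsilon_1}x\,y\Rightarrow\mathbf{B}_{\varepsilon_2}y\,z\Rightarrow\mathbf{B}_{\varepsilon_1+\varepsilon_2}x\,z$; (4) $(\forall\delta.\ \varepsilon<\delta\Rightarrow\mathbf{B}_\delta x\,y)\Rightarrow\mathbf{B}_\varepsilon x\,y$; (5) $(\forall\varepsilon.\ \mathbf{B}_\varepsilon x\,y)\Rightarrow x\asymp y$. $\mathbb{Q}$ has $\mathbf{B}_\varepsilon x\,y := |x-y|\le\varepsilon$. *)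

(* Defs.v *)
From HB Require Import structures.
From mathcomp Require Import all_boot all_order all_algebra.
Set Implicit Arguments. Unset Strict Implicit. Unset Printing Implicit Defensive.
Import Order.TTheory GRing.Theory Num.Theory.
Local Open Scope ring_scope.

Definition ou_pred (q : rat) : bool := (0 < q) && (q < 1).
Definition OU := {q : rat | ou_pred q}.
Definition ouv (o : OU) : rat := proj1_sig o.

Lemma ou_half : ou_pred (1 / 2%:R).
Proof. by []. Qed.
Definition ou_half_pt : OU := exist ou_pred (1 / 2%:R) ou_half.

(* Smart constructor: q itself when 0 < q < 1 (the only case in which it is
   used below); otherwise an irrelevant default. *)
Definition mkOU (q : rat) : OU :=
  match @idP (ou_pred q) with
  | ReflectT H => exist ou_pred q H
  | ReflectF _ => ou_half_pt
  end.

(* Formal rational step functions on [0,1]. *)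
Inductive StepF (X : Type) : Type :=
| constStepF : X -> StepF X
| glue : OU -> StepF X -> StepF X -> StepF X.
Arguments constStepF {X} x.
Arguments glue {X} o f g.

Fixpoint SplitL {X : Type} (f : StepF X) (a : OU) : StepF X :=
  match f with
  | constStepF x => constStepF x
  | glue o fl fr =>
      let a' := ouv a in let o' := ouv o in
      if a' < o' then SplitL fl (mkOU (a' / o'))
      else if a' == o' then fl
      else glue (mkOU (o' / a')) fl (SplitL fr (mkOU ((a' - o') / (1 - o'))))
  end.

Fixpoint SplitR {X : Type} (f : StepF X) (a : OU) : StepF X :=
  match f with
  | constStepF x => constStepF x
  | glue o fl fr =>
      let a' := ouv a in let o' := ouv o in
      if a' < o' then glue (mkOU ((o' - a') / (1 - a'))) (SplitR fl (mkOU (a' / o'))) fr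
      else if a' == o' then fr
      else SplitR fr (mkOU ((a' - o') / (1 - o')))
  end.

Fixpoint Smap {X Y : Type} (phi : X -> Y) (f : StepF X) : StepF Y :=
  match f with
  | constStepF x => constStepF (phi x)
  | glue o f g => glue o (Smap phi f) (Smap phi g)
  end.

Fixpoint Sap {X Y : Type} (F : StepF (X -> Y)) (x : StepF X) : StepF Y :=
  match F with
  | constStepF phi => Smap phi x
  | glue o Fl Fr => glue o (Sap Fl (SplitL x o)) (Sap Fr (SplitR x o))
  end.

Definition Sbin {X Y Z : Type} (op : X -> Y -> Z) (f : StepF X) (g : StepF Y)
  : StepF Z := Sap (Smap (fun u v => op u v) f) g.

Fixpoint Sfold {X Y : Type} (phi : X -> Y) (psi : OU -> Y -> Y -> Y)
  (f : StepF X) : Y :=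
  match f with
  | constStepF x => phi x
  | glue o f g => psi o (Sfold phi psi f) (Sfold phi psi g)
  end.

Definition fold_star : StepF Prop -> Prop :=
  Sfold (fun p => p) (fun _ p q => p /\ q).
Definition fold_sup : StepF rat -> rat :=
  Sfold (fun x => x) (fun _ x y => Num.max x y).
Definition fold_affine : StepF rat -> rat :=
  Sfold (fun x => x) (fun o x y => ouv o * x + (1 - ouv o) * y).

Definition stepEq {X : Type} (eqv : X -> X -> Prop) (f g : StepF X) : Prop :=
  fold_star (Sbin eqv f g).

Definition normInf (f : StepF rat) : rat := fold_sup (Smap (fun x => `|x|) f).
Definition norm1 (f : StepF rat) : rat := fold_affine (Smap (fun x => `|x|) f).

Definition ballInf (e : rat) (f g : StepF rat) : Prop :=
  normInf (Sbin (fun u v => u - v) f g) <= e.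
Definition ball1 (e : rat) (f g : StepF rat) : Prop :=
  norm1 (Sbin (fun u v => u - v) f g) <= e.

Definition ballSInf {X : Type} (B : rat -> X -> X -> Prop) (e : rat)
  (f g : StepF X) : Prop :=
  fold_star (Sap (Smap (B e) f) g).

Record is_metric (X : Type) (eqv : X -> X -> Prop) (B : rat -> X -> X -> Prop)
  : Prop := {
  ms_refl : forall x, eqv x x;
  ms_sym : forall x y, eqv x y -> eqv y x;
  ms_trans : forall x y z, eqv x y -> eqv y z -> eqv x z;
  ms_resp : forall e x x' y y', 0 < e -> eqv x x' -> eqv y y' ->
              (B e x y <-> B e x' y');
  ms_ball_refl : forall e x, 0 < e -> B e x x;
  ms_ball_sym : forall e x y, 0 < e -> B e x y -> B e y x;
  ms_ball_triangle : forall e1 e2 x y z, 0 < e1 -> 0 < e2 ->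
              B e1 x y -> B e2 y z -> B (e1 + e2) x z;
  ms_ball_closed : forall e x y, 0 < e ->
              (forall d, e < d -> B d x y) -> B e x y;
  ms_ball_eq : forall x y, (forall e, 0 < e -> B e x y) -> eqv x y
}.
Arguments is_metric : clear implicits.

(* Main.v *)
Require Import Defs.
From HB Require Import structures.
From mathcomp Require Import all_boot all_order all_algebra.
From Stdlib Require Import Ring Field.
Set Implicit Arguments. Unset Strict Implicit. Unset Printing Implicit Defensive.
Import Order.TTheory GRing.Theory Num.Theory.
Local Open Scope ring_scope.

Definition R := rat.
Definition radd (x y : R) : R := x + y.
Definition rmul (x y : R) : R := x * y.
Definition rsub (x y : R) : R := x - y.
Definition ropp (x : R) : R := - x.
Definition rdiv (x y : R) : R := x / y.
Definition rinv (x : R) : R := x^-1.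
Definition r0 : R := 0.
Definition r1 : R := 1.
Lemma rat_ring : ring_theory r0 r1 radd rmul rsub ropp (@eq R).
Proof. rewrite /radd/rmul/rsub/ropp/r0/r1. split=> *; rewrite ?add0r ?mul1r ?mulrDl ?subrr //; [exact: addrC|exact: addrA|exact: mulrC|exact: mulrA]. Qed.
Lemma rat_field : field_theory r0 r1 radd rmul rsub ropp rdiv rinv (@eq R).
Proof. split=> //; first exact: rat_ring. by move=> p /eqP hp; rewrite /rmul/rinv mulVf. Qed.
Add Field ratF : rat_field.
Lemma eqR_hack (a b : R) : radd a r0 = radd b r0 -> a = b.
Proof. by rewrite /radd/r0 !addr0. Qed.
Ltac fold_r := repeat match goal with
 | |- context [@GRing.inv _ ?x] => change (@GRing.inv _ x) with (rinv x)
 | |- context [@GRing.mul _ ?x ?y] => change (@GRing.mul _ x y) with (rmul x y)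
 | |- context [@Algebra.opp _ ?x] => change (@Algebra.opp _ x) with (ropp x)
 | |- context [@Algebra.add _ ?x ?y] => change (@Algebra.add _ x y) with (radd x y)
 | |- context [@Algebra.zero _] => change (@Algebra.zero _) with r0
 | |- context [@GRing.one _] => change (@GRing.one _) with r1
 end;
 match goal with |- @eq _ ?a ?b => change (@eq R a b) end.
Ltac rfield := fold_r; apply: eqR_hack; field; rewrite /r0/r1/radd/ropp/rmul/rinv;
  repeat split; try (apply/eqP; by []); try assumption.

Lemma mkOU_val q : ou_pred q -> ouv (mkOU q) = q.
Proof. move=> h; rewrite /mkOU; destruct idP as [h'|h'] => //; by case: h'. Qed.

Lemma ou_gt0 (o : OU) : 0 < ouv o.
Proof. by case: o => q /= /andP[]. Qed.
Lemma ou_lt1 (o : OU) : ouv o < 1.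
Proof. by case: o => q /= /andP[]. Qed.
Lemma ou_neq0 (o : OU) : ouv o != 0.
Proof. by rewrite gt_eqF // ou_gt0. Qed.
Lemma ou_1neq0 (o : OU) : 1 - ouv o != 0.
Proof. by rewrite subr_eq0 eq_sym lt_eqF // ou_lt1. Qed.
Lemma ou_1gt0 (o : OU) : 0 < 1 - ouv o.
Proof. by rewrite subr_gt0 ou_lt1. Qed.

Definition in01 (t : rat) : bool := (0 <= t) && (t < 1).

Fixpoint eval {X : Type} (f : StepF X) (t : rat) : X :=
  match f with
  | constStepF x => x
  | glue o f g => if t < ouv o then eval f (t / ouv o)
                  else eval g ((t - ouv o) / (1 - ouv o))
  end.

Lemma in01_lo (o : rat) t : 0 < o -> in01 t -> t < o -> in01 (t / o).
Proof.
move=> o0 /andP[t0 t1] to; apply/andP; split; first by rewrite divr_ge0 // ltW.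
by rewrite ltr_pdivrMr // mul1r.
Qed.

Lemma in01_hi (o : rat) t : o < 1 -> in01 t -> ~~ (t < o) -> in01 ((t - o) / (1 - o)).
Proof.
move=> o1 /andP[t0 t1]; rewrite -leNgt => ot; have h : 0 < 1 - o by rewrite subr_gt0.
apply/andP; split; first by rewrite divr_ge0 // ?subr_ge0 // ltW.
by rewrite ltr_pdivrMr // mul1r ltrD2r.
Qed.

Lemma lo_lt (o : rat) s : 0 < o -> in01 s -> o * s < o.
Proof. by move=> o0 /andP[_ s1]; rewrite -{2}(mulr1 o) ltr_pM2l. Qed.

Lemma in01_lo' (o : rat) s : 0 < o -> o < 1 -> in01 s -> in01 (o * s).
Proof.
move=> o0 o1 hs; have := lo_lt o0 hs; case/andP: hs => s0 s1 h.
by apply/andP; split; [rewrite mulr_ge0 // ltW | exact: lt_trans h o1].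
Qed.

Lemma hi_nlt (o : rat) s : o < 1 -> in01 s -> ~~ (o + (1 - o) * s < o).
Proof.
move=> o1 /andP[s0 _]; rewrite -leNgt -{1}(addr0 o) lerD2l mulr_ge0 //.
by rewrite subr_ge0 ltW.
Qed.

Lemma in01_hi' (o : rat) s : 0 < o -> o < 1 -> in01 s -> in01 (o + (1 - o) * s).
Proof.
move=> o0 o1 hs; have := hi_nlt o1 hs; rewrite -leNgt => h.
case/andP: hs => s0 s1; apply/andP; split; first exact: le_trans (ltW o0) h.
have h1 : 0 < 1 - o by rewrite subr_gt0.
rewrite -ltrBrDl -{2}(mulr1 (1 - o)) ltr_pM2l //.
Qed.

Lemma split01 (o : OU) (P : rat -> Prop) :
  (forall t, in01 t -> P t) <->
  (forall s, in01 s -> P (ouv o * s)) /\ (forall s, in01 s -> P (ouv o + (1 - ouv o) * s)).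
Proof.
have o0 := ou_gt0 o; have o1 := ou_lt1 o; have n0 := ou_neq0 o; have n1 := ou_1neq0 o.
split.
  move=> H; split=> s hs; apply: H; [exact: in01_lo'|exact: in01_hi'].
case=> H1 H2 t ht; case: (boolP (t < ouv o)) => c.
  have := H1 _ (in01_lo o0 ht c).
  have -> : ouv o * (t / ouv o) = t by move: n0 => /eqP n0; rfield.
  done.
have := H2 _ (in01_hi o1 ht c).
have -> : ouv o + (1 - ouv o) * ((t - ouv o) / (1 - ouv o)) = t by move: n1 => /eqP n1; rfield.
done.
Qed.

Lemma eval_glue_l X o (f g : StepF X) s : in01 s -> eval (glue o f g) (ouv o * s) = eval f s.
Proof.
move=> hs /=; rewrite lo_lt ?ou_gt0 //; congr eval.
by move: (ou_neq0 o) => /eqP n0; rfield.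
Qed.

Lemma eval_glue_r X o (f g : StepF X) s : in01 s -> eval (glue o f g) (ouv o + (1 - ouv o) * s) = eval g s.
Proof.
move=> hs /=; rewrite (negbTE (hi_nlt (ou_lt1 o) hs)); congr eval.
by move: (ou_1neq0 o) => /eqP n0; rfield.
Qed.
Lemma ou_div (x y : rat) : 0 < x -> x < y -> ou_pred (x / y).
Proof.
move=> x0 xy; have y0 := lt_trans x0 xy.
by apply/andP; split; [rewrite divr_gt0 | rewrite ltr_pdivrMr // mul1r].
Qed.

Ltac nz := repeat match goal with
  | o : OU |- _ => move: (ou_neq0 o) (ou_1neq0 o) (ou_gt0 o) (ou_lt1 o) (ou_1gt0 o); move: o
  end; move=> *.

Lemma evalSplitL X (f : StepF X) a t : in01 t -> eval (SplitL f a) t = eval f (ouv a * t).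
Proof.
elim: f a t => [x|o fl IHl fr IHr] a t ht //=.
have o0 := ou_gt0 o; have o1 := ou_lt1 o; have a0 := ou_gt0 a; have a1 := ou_lt1 a.
have /eqP on0 := ou_neq0 o; have /eqP an0 := ou_neq0 a; have /eqP o1n := ou_1neq0 o.
have at_a : ouv a * t < ouv a by rewrite lo_lt.
case: ltgtP => [ao|oa|ao].
- rewrite IHl // (lt_trans at_a ao) mkOU_val; last exact: ou_div.
  by f_equal; rfield.
- have /eqP aon : ouv a - ouv o != 0 by rewrite subr_eq0 gt_eqF.
  have /eqP oan : 1 - ouv o / ouv a != 0.
    by rewrite subr_eq0 eq_sym lt_eqF // ltr_pdivrMr // mul1r.
  rewrite /= mkOU_val; last exact: ou_div.
  rewrite ltr_pdivlMr // [t * ouv a]mulrC.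
  case: ifP => c; first by f_equal; rfield.
  rewrite IHr; last by apply: in01_hi => //; [rewrite ltr_pdivrMr // mul1r| rewrite ltr_pdivlMr // mulrC c].
  rewrite mkOU_val; last by apply: ou_div; rewrite ?subr_gt0 // ltrD2r.
  by f_equal; rfield.
- rewrite -ao at_a; f_equal; rewrite ao; rfield.
Qed.

Lemma evalSplitR X (f : StepF X) a t : in01 t -> eval (SplitR f a) t = eval f (ouv a + (1 - ouv a) * t).
Proof.
elim: f a t => [x|o fl IHl fr IHr] a t ht //=.
have o0 := ou_gt0 o; have o1 := ou_lt1 o; have a0 := ou_gt0 a; have a1 := ou_lt1 a.
have /eqP on0 := ou_neq0 o; have /eqP an0 := ou_neq0 a; have /eqP o1n := ou_1neq0 o.
have /eqP a1n := ou_1neq0 a.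
have a1p := ou_1gt0 a.
have ua : ouv a <= ouv a + (1 - ouv a) * t.
  by case/andP: ht => t0 _; rewrite lerDl mulr_ge0 // ltW.
case: ltgtP => [ao|oa|ao].
- have /eqP aon : ouv o - ouv a != 0 by rewrite subr_eq0 gt_eqF.
  have op : ou_pred ((ouv o - ouv a) / (1 - ouv a)) by apply: ou_div; rewrite ?subr_gt0 // ltrD2r.
  have /eqP o'n : 1 - (ouv o - ouv a) / (1 - ouv a) != 0.
    by rewrite subr_eq0 eq_sym lt_eqF //; case/andP: op.
  rewrite /= mkOU_val //.
  have hc : (t < (ouv o - ouv a) / (1 - ouv a)) = (ouv a + (1 - ouv a) * t < ouv o).
    by rewrite ltr_pdivlMr // mulrC ltrBrDl addrC.
  rewrite hc; case: ifP => c.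
    rewrite IHl; last by apply: in01_lo => //; [case/andP: op => -> | rewrite hc].
    rewrite mkOU_val; last exact: ou_div.
    by f_equal; rfield.
  by f_equal; rfield.
- rewrite IHr // mkOU_val; last by apply: ou_div; rewrite ?subr_gt0 // ltrD2r.
  have ->: (ouv a + (1 - ouv a) * t < ouv o) = false.
    by apply/negbTE; rewrite -leNgt (le_trans (ltW oa) ua).
  by f_equal; rfield.
- rewrite -ao (negbTE (hi_nlt _ ht)) //; f_equal; rewrite ao; rfield.
Qed.

Lemma evalSmap X Y (phi : X -> Y) f t : eval (Smap phi f) t = phi (eval f t).
Proof. by elim: f t => [x|o f IHf g IHg] t //=; case: ifP. Qed.

Lemma evalSap X Y (F : StepF (X -> Y)) x t : in01 t -> eval (Sap F x) t = eval F t (eval x t).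
Proof.
elim: F x t => [phi|o Fl IHl Fr IHr] x t ht /=; first exact: evalSmap.
have o0 := ou_gt0 o; have o1 := ou_lt1 o.
have /eqP on0 := ou_neq0 o; have /eqP o1n := ou_1neq0 o.
case: ifP => c.
  rewrite IHl ?evalSplitL; try exact: in01_lo.
  by congr (eval _ _ (eval x _)); rfield.
rewrite IHr ?evalSplitR; try (apply: in01_hi => //; rewrite c //).
by congr (eval _ _ (eval x _)); rfield.
Qed.

Lemma evalSbin X Y Z (op : X -> Y -> Z) f g t : in01 t -> eval (Sbin op f g) t = op (eval f t) (eval g t).
Proof. by move=> ht; rewrite /Sbin evalSap // evalSmap. Qed.
Lemma in01_0 : in01 0. Proof. by []. Qed.

Lemma fold_star_eval (f : StepF Prop) : fold_star f <-> (forall t, in01 t -> eval f t).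
Proof.
elim: f => [p|o f IHf g IHg].
  by split=> [h t _|h]; [|exact: h 0 in01_0].
change (fold_star f /\ fold_star g <-> forall t, in01 t -> eval (glue o f g) t).
rewrite IHf IHg (split01 o (fun t => eval (glue o f g) t)).
split; case=> H1 H2; split=> s hs.
- by rewrite eval_glue_l //; apply: H1.
- by rewrite eval_glue_r //; apply: H2.
- by move: (H1 s hs); rewrite eval_glue_l.
- by move: (H2 s hs); rewrite eval_glue_r.
Qed.

Lemma fold_sup_le (f : StepF rat) e : fold_sup f <= e <-> (forall t, in01 t -> eval f t <= e).
Proof.
elim: f => [p|o f IHf g IHg].
  by split=> [h t _|h]; [|exact: h 0 in01_0].
change (Num.max (fold_sup f) (fold_sup g) <= e <-> forall t, in01 t -> eval (glue o f g) t <= e).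
rewrite ge_max (split01 o (fun t => eval (glue o f g) t <= e)).
split.
  case/andP=> /IHf H1 /IHg H2; split=> s hs.
  - by rewrite eval_glue_l //; apply: H1.
  - by rewrite eval_glue_r //; apply: H2.
case=> H1 H2; apply/andP; split; [apply/IHf|apply/IHg] => s hs.
- by move: (H1 s hs); rewrite eval_glue_l.
- by move: (H2 s hs); rewrite eval_glue_r.
Qed.

Notation I := fold_affine.

Lemma I_const c : I (constStepF c) = c. Proof. by []. Qed.

Lemma I_glue o (f g : StepF rat) : I (glue o f g) = ouv o * I f + (1 - ouv o) * I g.
Proof. by []. Qed.

Lemma SplitL_glue X o (fl fr : StepF X) a : SplitL (glue o fl fr) a =
  if ouv a < ouv o then SplitL fl (mkOU (ouv a / ouv o)) else if ouv a == ouv o then fl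
  else glue (mkOU (ouv o / ouv a)) fl (SplitL fr (mkOU ((ouv a - ouv o) / (1 - ouv o)))).
Proof. by []. Qed.

Lemma SplitR_glue X o (fl fr : StepF X) a : SplitR (glue o fl fr) a =
  if ouv a < ouv o then glue (mkOU ((ouv o - ouv a) / (1 - ouv a))) (SplitR fl (mkOU (ouv a / ouv o))) fr
  else if ouv a == ouv o then fr
  else SplitR fr (mkOU ((ouv a - ouv o) / (1 - ouv o))).
Proof. by []. Qed.

Lemma I_split (f : StepF rat) a : I f = ouv a * I (SplitL f a) + (1 - ouv a) * I (SplitR f a).
Proof.
elim: f a => [c|o fl IHl fr IHr] a.
  by rewrite /=; rfield.
have o0 := ou_gt0 o; have o1 := ou_lt1 o; have a0 := ou_gt0 a; have a1 := ou_lt1 a.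
have /eqP on0 := ou_neq0 o; have /eqP an0 := ou_neq0 a; have /eqP o1n := ou_1neq0 o.
have /eqP a1n := ou_1neq0 a.
rewrite SplitL_glue SplitR_glue; case: ltgtP => [ao|oa|ao].
- have op : ou_pred ((ouv o - ouv a) / (1 - ouv a)) by apply: ou_div; rewrite ?subr_gt0 // ltrD2r.
  have op2 : ou_pred (ouv a / ouv o) by apply: ou_div.
  rewrite !I_glue (IHl (mkOU (ouv a / ouv o))) !mkOU_val //.
  rfield.
- have op : ou_pred ((ouv a - ouv o) / (1 - ouv o)) by apply: ou_div; rewrite ?subr_gt0 // ltrD2r.
  have op2 : ou_pred (ouv o / ouv a) by apply: ou_div.
  rewrite !I_glue (IHr (mkOU ((ouv a - ouv o) / (1 - ouv o)))) !mkOU_val //.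
  rfield.
- by rewrite !I_glue ao.
Qed.

Lemma I_mono (f g : StepF rat) : (forall t, in01 t -> eval f t <= eval g t) -> I f <= I g.
Proof.
elim: f g => [c|o f1 IH1 f2 IH2] g H.
  elim: g H => [d|o g1 IHg1 g2 IHg2] H; first exact: H 0 in01_0.
  have [H1 H2] := (split01 o (fun t => c <= eval (glue o g1 g2) t)).1 H.
  have -> : I (constStepF c) = ouv o * c + (1 - ouv o) * c by rewrite I_const; rfield.
  rewrite I_glue lerD // ler_wpM2l ?(ltW (ou_gt0 o)) ?(ltW (ou_1gt0 o)) //.
  + by apply: IHg1 => s hs; move: (H1 s hs); rewrite eval_glue_l.
  + by apply: IHg2 => s hs; move: (H2 s hs); rewrite eval_glue_r.
have [H1 H2] := (split01 o (fun t => eval (glue o f1 f2) t <= eval g t)).1 H.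
rewrite I_glue (I_split g o) lerD // ler_wpM2l ?(ltW (ou_gt0 o)) ?(ltW (ou_1gt0 o)) //.
+ by apply: IH1 => s hs; move: (H1 s hs); rewrite eval_glue_l // evalSplitL.
+ by apply: IH2 => s hs; move: (H2 s hs); rewrite eval_glue_r // evalSplitR.
Qed.

Lemma I_add (f g : StepF rat) : I (Sbin (fun u v => u + v) f g) = I f + I g.
Proof.
elim: f g => [c|o f1 IH1 f2 IH2] g.
  change (I (Smap (fun v => c + v) g) = c + I g).
  elim: g => [d|o g1 IHg1 g2 IHg2] //.
  by rewrite /= !I_glue IHg1 IHg2; rfield.
change (I (glue o (Sbin (fun u v => u + v) f1 (SplitL g o)) (Sbin (fun u v => u + v) f2 (SplitR g o))) = I (glue o f1 f2) + I g).
by rewrite !I_glue IH1 IH2 (I_split g o); rfield.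
Qed.


Lemma I_ge0 (h : StepF rat) : (forall t, in01 t -> 0 <= eval h t) -> 0 <= I h.
Proof. by move=> H; rewrite -(I_const 0); apply: I_mono. Qed.

Lemma I_zero (h : StepF rat) : (forall t, in01 t -> 0 <= eval h t) -> I h <= 0 ->
  forall t, in01 t -> eval h t = 0.
Proof.
elim: h => [c|o h1 IH1 h2 IH2] H hle.
  by move=> t _; apply/le_anti; rewrite hle (H 0 in01_0).
have [H1 H2] := (split01 o (fun t => 0 <= eval (glue o h1 h2) t)).1 H.
have K1 : forall s, in01 s -> 0 <= eval h1 s by move=> s hs; move: (H1 s hs); rewrite eval_glue_l.
have K2 : forall s, in01 s -> 0 <= eval h2 s by move=> s hs; move: (H2 s hs); rewrite eval_glue_r.
have i1 := I_ge0 K1; have i2 := I_ge0 K2.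
have p1 : 0 <= ouv o * I h1 by rewrite mulr_ge0 // ltW // ou_gt0.
have p2 : 0 <= (1 - ouv o) * I h2 by rewrite mulr_ge0 // ltW // ou_1gt0.
rewrite I_glue in hle.
have L1 : I h1 <= 0.
  by rewrite -(pmulr_rle0 _ (ou_gt0 o)) (le_trans _ hle) // lerDl.
have L2 : I h2 <= 0.
  by rewrite -(pmulr_rle0 _ (ou_1gt0 o)) (le_trans _ hle) // lerDr.
apply/(split01 o (fun t => eval (glue o h1 h2) t = 0)); split=> s hs.
  by rewrite eval_glue_l //; apply: IH1.
by rewrite eval_glue_r //; apply: IH2.
Qed.
Lemma stepEq_eval X (eqv : X -> X -> Prop) f g :
  stepEq eqv f g <-> (forall t, in01 t -> eqv (eval f t) (eval g t)).
Proof.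
rewrite /stepEq fold_star_eval; split=> H t ht; move: (H t ht); by rewrite evalSbin.
Qed.

Lemma ballSInf_eval X (B : rat -> X -> X -> Prop) e f g :
  ballSInf B e f g <-> (forall t, in01 t -> B e (eval f t) (eval g t)).
Proof.
rewrite /ballSInf fold_star_eval; split=> H t ht; move: (H t ht); by rewrite evalSap // evalSmap.
Qed.

Definition D (f g : StepF rat) := Smap (fun x => `|x|) (Sbin (fun u v => u - v) f g).

Lemma evalD f g t : in01 t -> eval (D f g) t = `|eval f t - eval g t|.
Proof. by move=> ht; rewrite /D evalSmap evalSbin. Qed.

Lemma ballInf_eval e f g :
  ballInf e f g <-> (forall t, in01 t -> `|eval f t - eval g t| <= e).
Proof.
rewrite /ballInf /normInf fold_sup_le -/(D f g).
by split=> H t ht; move: (H t ht); rewrite evalD.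
Qed.

Lemma ball1_I e f g : ball1 e f g <-> I (D f g) <= e.
Proof. by []. Qed.

Lemma closed_rat (x e : rat) : (forall d, e < d -> x <= d) -> x <= e.
Proof.
move=> H; rewrite leNgt; apply/negP => ex.
have [h1 h2] := midf_lt ex.
by move: (H _ h1); rewrite leNgt h2.
Qed.

Lemma le0_rat (x : rat) : (forall e, 0 < e -> x <= e) -> x <= 0.
Proof. by move=> H; apply: closed_rat. Qed.

Lemma I_D_eq f g f' g' : (forall t, in01 t -> eval f t = eval f' t) ->
  (forall t, in01 t -> eval g t = eval g' t) -> I (D f g) = I (D f' g').
Proof.
move=> Hf Hg; apply/le_anti/andP; split; apply: I_mono => t ht;
  by rewrite !evalD // Hf // Hg.
Qed.

Lemma I_D_sym f g : I (D f g) = I (D g f).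
Proof. apply/le_anti/andP; split; apply: I_mono => t ht; by rewrite !evalD // distrC. Qed.

Theorem mainTheorem11 :
  is_metric (StepF rat) (stepEq (@eq rat)) ballInf /\
  is_metric (StepF rat) (stepEq (@eq rat)) ball1 /\
  (forall (X : Type) (eqv : X -> X -> Prop) (B : rat -> X -> X -> Prop),
      is_metric X eqv B -> is_metric (StepF X) (stepEq eqv) (ballSInf B)).
Proof.
split; [|split].
- constructor.
  + by move=> f; apply/stepEq_eval.
  + by move=> f g /stepEq_eval H; apply/stepEq_eval => t ht; rewrite H.
  + move=> f g h /stepEq_eval H1 /stepEq_eval H2; apply/stepEq_eval => t ht.
    by rewrite H1 // H2.
  + move=> e f f' g g' _ /stepEq_eval Hf /stepEq_eval Hg; rewrite !ballInf_eval.
    by split=> H t ht; move: (H t ht); rewrite Hf // Hg.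
  + move=> e f e0; apply/ballInf_eval => t ht; by rewrite subrr normr0 ltW.
  + move=> e f g _ /ballInf_eval H; apply/ballInf_eval => t ht; by rewrite distrC H.
  + move=> e1 e2 f g h _ _ /ballInf_eval H1 /ballInf_eval H2; apply/ballInf_eval => t ht.
    exact: le_trans (ler_distD (eval g t) _ _) (lerD (H1 t ht) (H2 t ht)).
  + move=> e f g _ H; apply/ballInf_eval => t ht; apply: closed_rat => d ed.
    exact: (proj1 (ballInf_eval _ _ _) (H d ed)).
  + move=> f g H; apply/stepEq_eval => t ht; apply/eqP; rewrite -subr_eq0 -normr_le0.
    apply: le0_rat => e e0; exact: (proj1 (ballInf_eval _ _ _) (H e e0)).
- constructor.
  + by move=> f; apply/stepEq_eval.
  + by move=> f g /stepEq_eval H; apply/stepEq_eval => t ht; rewrite H.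
  + move=> f g h /stepEq_eval H1 /stepEq_eval H2; apply/stepEq_eval => t ht.
    by rewrite H1 // H2.
  + move=> e f f' g g' _ /stepEq_eval Hf /stepEq_eval Hg; rewrite !ball1_I.
    by rewrite (I_D_eq Hf Hg).
  + move=> e f e0; rewrite ball1_I; apply: le_trans (ltW e0).
    rewrite -(I_const 0); apply: I_mono => t ht; by rewrite evalD // subrr normr0.
  + by move=> e f g _; rewrite !ball1_I I_D_sym.
  + move=> e1 e2 f g h _ _; rewrite !ball1_I => H1 H2.
    apply: le_trans (lerD H1 H2); rewrite -I_add; apply: I_mono => t ht.
    by rewrite evalSbin // !evalD // ler_distD.
  + move=> e f g _ H; rewrite ball1_I; apply: closed_rat => d ed; exact: H.
  + move=> f g H; apply/stepEq_eval => t ht.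
    have h0 : I (D f g) <= 0 by apply: le0_rat => e e0; exact: H.
    have K : forall s, in01 s -> 0 <= eval (D f g) s by move=> s hs; rewrite evalD.
    have := I_zero K h0 ht; rewrite evalD // => /eqP; by rewrite normr_eq0 subr_eq0 => /eqP.
- move=> X eqv B HM; constructor.
  + by move=> f; apply/stepEq_eval => t ht; apply: ms_refl HM _.
  + by move=> f g /stepEq_eval H; apply/stepEq_eval => t ht; apply: (ms_sym HM); apply: H.
  + move=> f g h /stepEq_eval H1 /stepEq_eval H2; apply/stepEq_eval => t ht.
    exact: (ms_trans HM (H1 t ht) (H2 t ht)).
  + move=> e f f' g g' e0 /stepEq_eval Hf /stepEq_eval Hg; rewrite !ballSInf_eval.
    split=> H t ht; move: (H t ht).
      exact: (proj1 (ms_resp HM e0 (Hf t ht) (Hg t ht))).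
    exact: (proj2 (ms_resp HM e0 (Hf t ht) (Hg t ht))).
  + by move=> e f e0; apply/ballSInf_eval => t ht; apply: (ms_ball_refl HM).
  + move=> e f g e0 /ballSInf_eval H; apply/ballSInf_eval => t ht.
    exact: (ms_ball_sym HM e0 (H t ht)).
  + move=> e1 e2 f g h p1 p2 /ballSInf_eval H1 /ballSInf_eval H2; apply/ballSInf_eval => t ht.
    exact: (ms_ball_triangle HM p1 p2 (H1 t ht) (H2 t ht)).
  + move=> e f g e0 H; apply/ballSInf_eval => t ht; apply: (ms_ball_closed HM e0) => d ed.
    exact: (proj1 (ballSInf_eval _ _ _ _) (H d ed)).
  + move=> f g H; apply/stepEq_eval => t ht; apply: (ms_ball_eq HM) => e e0.
    exact: (proj1 (ballSInf_eval _ _ _ _) (H e e0)).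
Qed.
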